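(* Let $\kappa$ be a regular infinite cardinal and $B$ a Boolean algebra with the $\kappa$-FN. Let $\lambda$ be a cardinal with $\lambda=\lambda^{<\kappa}$ and let $X\subseteq B$ with $|X|>\lambda$. Then there is an independent set $Y\subseteq X$ with $|Y|>\lambda$.
   Context: For an infinite cardinal $\kappa$, a Boolean algebra $B$ (with its canonical partial order) has the $\kappa$-Freese–Nation property ($\kappa$-FN) if there is a map $f:B\to[B]^{<\kappa}$ such that for all $a,b\in B$ with $a\le b$ there is $c\in f(a)\cap f(b)$ with $a\le c\le b$. A subset $Y$ of a Boolean algebra is independent if every elementary product $y_0^{\epsilon_0}\cdots y_{n-1}^{\epsilon_{n-1}}$ of finitely many distinct $y_i\in Y$ (where $y^1=y$, $y^0=-y$) is nonzero. *)

(* Defs.v *)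
(* Boolean algebras = ctbDistrLatticeType (order.v). *)
From mathcomp Require Import all_boot all_order.
Set Implicit Arguments. Unset Strict Implicit. Unset Printing Implicit Defensive.
Import Order.Theory.
Local Open Scope order_scope.

(* Cardinal comparison of types (cardinalities represented by types). *)
Definition card_le (A B : Type) : Prop := exists f : A -> B, injective f.
Definition card_lt (A B : Type) : Prop := card_le A B /\ ~ card_le B A.

Definition infinite_card (K : Type) : Prop := card_le nat K.

Definition regular_card (K : Type) : Prop :=
  infinite_card K /\
  forall (I : Type) (A : I -> K -> Prop),
    card_lt I K -> (forall i, card_lt {x : K | A i x} K) ->
    exists k : K, forall i, ~ A i k.

(* |L| = |L|^{<|K|}, i.e. |L|^mu <= |L| for every cardinal mu < |K|. *)
Definition pow_lt_eq (L K : Type) : Prop :=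
  forall M : Type, card_lt M K -> card_le (M -> L) L.

Definition kappa_FN (K : Type) d (B : ctbDistrLatticeType d) : Prop :=
  exists f : B -> (B -> Prop),
    (forall a, card_lt {x : B | f a x} K) /\
    (forall a b : B, a <= b -> exists c : B, f a c /\ f b c /\ a <= c /\ c <= b).

Definition independent d (B : ctbDistrLatticeType d) (Y : B -> Prop) : Prop :=
  forall (n : nat) (y : 'I_n -> B) (eps : 'I_n -> bool),
    injective y -> (forall i, Y (y i)) ->
    \meet_(i < n) (if eps i then y i else ~` y i) != \bot.

(* Main.v *)
Require Import Defs.
From mathcomp Require Import all_boot all_order.
From mathcomp Require Import boolp wochoice classical_sets zify.
Set Implicit Arguments. Unset Strict Implicit. Unset Printing Implicit Defensive.
Import Order.Theory.
Local Open Scope order_scope.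
Lemma NNPP (P : Prop) : ~ ~ P -> P.
Proof. by case: (pselect P) => // nP /(_ nP). Qed.

Lemma cle_refl (A : Type) : card_le A A.
Proof. by exists id. Qed.

Lemma cle_trans (A B C : Type) : card_le A B -> card_le B C -> card_le A C.
Proof.
move=> [g gi] [h hi]; exists (h \o g) => x y /= E; apply: gi; exact: hi.
Qed.

Lemma cle_inj (A B : Type) (g : A -> B) : injective g -> card_le A B.
Proof. by move=> gi; exists g. Qed.

Lemma sig_eqP (T : Type) (P : T -> Prop) (x y : {b | P b}) : proj1_sig x = proj1_sig y -> x = y.
Proof.
case: x => x px; case: y => y py /= E; subst y.
by rewrite (Prop_irrelevance px py).
Qed.

Lemma cle_cover (W T : Type) (P : T -> Prop) (R : W -> T -> Prop) :
  (forall w b b', R w b -> R w b' -> b = b') ->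
  (forall b, P b -> exists w, R w b) -> card_le {b | P b} W.
Proof.
move=> Rf HP.
exists (fun b => proj1_sig (cid (HP (proj1_sig b) (proj2_sig b)))).
move=> x y E; apply: sig_eqP.
move: E; case: (cid _) => w1 R1; case: (cid _) => w2 R2 /= E; subst w2.
exact: Rf R1 R2.
Qed.

Lemma cle_sub (T : Type) (P Q : T -> Prop) :
  (forall x, P x -> Q x) -> card_le {x | P x} {x | Q x}.
Proof.
move=> PQ; exists (fun x => exist Q (proj1_sig x) (PQ _ (proj2_sig x))).
by move=> x y E; apply: sig_eqP; exact: (congr1 (@proj1_sig _ _) E).
Qed.

Lemma clt_le (S S' K : Type) : card_lt S K -> card_le S' S -> card_lt S' K.
Proof.
move=> [SK nKS] S'S; split; first exact: cle_trans S'S SK.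
by move=> KS'; apply: nKS; exact: cle_trans KS' S'S.
Qed.

Lemma cle_fun (M A B : Type) : card_le A B -> card_le (M -> A) (M -> B).
Proof.
move=> [g gi]; exists (fun h => g \o h) => h1 h2 E.
apply: funext => m; apply: gi; exact: (congr1 (fun h => h m) E).
Qed.

Lemma cle_total (A B : Type) : card_le A B \/ card_le B A.
Proof.
pose P (G : set (A * B)) :=
  (forall a b b', G (a, b) -> G (a, b') -> b = b') /\
  (forall a a' b, G (a, b) -> G (a', b) -> a = a').
have chainP : forall F : set (set (A * B)), (F `<=` P)%classic ->
    total_on F subset -> P (\bigcup_(X in F) X)%classic.
  move=> F FP Ftot; split.
  - move=> a b b' [X FX Xab] [Y FY Yab'].
    case: (Ftot X Y FX FY) => [XY|YX].
      exact: (FP Y FY).1 a b b' (XY _ Xab) Yab'.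
    exact: (FP X FX).1 a b b' Xab (YX _ Yab').
  - move=> a a' b [X FX Xab] [Y FY Yab'].
    case: (Ftot X Y FX FY) => [XY|YX].
      exact: (FP Y FY).2 a a' b (XY _ Xab) Yab'.
    exact: (FP X FX).2 a a' b Xab (YX _ Yab').
have [G [[Gf Gi] Gmax]] := Zorn_bigcup chainP.
case: (pselect (forall a, exists b, G (a, b))) => [Hall|Hnall].
  left; exists (fun a => proj1_sig (cid (Hall a))) => a a'.
  case: (cid _) => b1 H1; case: (cid _) => b2 H2 /= E; subst b2.
  exact: Gi H1 H2.
case: (pselect (forall b, exists a, G (a, b))) => [Hall|Hnall2].
  right; exists (fun b => proj1_sig (cid (Hall b))) => b b'.
  case: (cid _) => a1 H1; case: (cid _) => a2 H2 /= E; subst a2.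
  exact: Gf H1 H2.
exfalso.
have [a0 Ha0] : exists a0, forall b, ~ G (a0, b).
  apply: NNPP => N; apply: Hnall => a; apply: NNPP => N2; apply: N.
  by exists a; move=> b Gab; apply: N2; exists b.
have [b0 Hb0] : exists b0, forall a, ~ G (a, b0).
  apply: NNPP => N; apply: Hnall2 => b; apply: NNPP => N2; apply: N.
  by exists b; move=> a Gab; apply: N2; exists a.
have Hpr : (G `<` (fun p => G p \/ p = (a0, b0)))%classic.
  split; first by move=> p Gp; left.
  by move=> H; apply: (Ha0 b0); apply: H; right.
apply: (Gmax _ Hpr).
split.
- move=> a b b' [Gab|E] [Gab'|E'].
  + exact: Gf Gab Gab'.
  + by case: E' => E1 E2; subst; case: (Ha0 _ Gab).
  + by case: E => E1 E2; subst; case: (Ha0 _ Gab').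
  + by case: E => E1 E2; case: E' => E3 E4; subst.
- move=> a a' b [Gab|E] [Gab'|E'].
  + exact: Gi Gab Gab'.
  + by case: E' => E1 E2; subst; case: (Hb0 _ Gab).
  + by case: E => E1 E2; subst; case: (Hb0 _ Gab').
  + by case: E => E1 E2; case: E' => E3 E4; subst.
Qed.

Lemma not_clt_le (A B : Type) : ~ card_lt A B -> card_le B A.
Proof.
move=> N; case: (pselect (card_le B A)) => // nBA; exfalso; apply: N; split => //.
by case: (cle_total A B) => // /nBA.
Qed.
Lemma cantor (L : Type) : ~ card_le (L -> bool) L.
Proof.
move=> [g gi].
pose D := fun l : L => ~~ `[< exists h, g h = l /\ h l >].
case: (pselect (exists h, g h = g D /\ h (g D))) => [[h [E hD]]|N].
  move: (gi _ _ E) => Eh; subst h.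
  have HD : D (g D) = ~~ `[< exists h, g h = g D /\ h (g D) >] := erefl.
  move: (hD); rewrite HD asboolT //; by exists D.
have HD : D (g D) = ~~ `[< exists h, g h = g D /\ h (g D) >] := erefl.
apply: (N); exists D; split => //; rewrite HD asboolF //.
Qed.

Lemma inf_two (L : Type) : infinite_card L -> exists l0 l1 : L, l0 <> l1.
Proof. by move=> [e ei]; exists (e 0%N), (e 1%N) => /ei. Qed.

Lemma bool_le_inf (L : Type) : infinite_card L -> card_le bool L.
Proof.
move=> [e ei]; exists (fun b : bool => e (nat_of_bool b)) => b b' /ei.
by case: b; case: b'.
Qed.

Lemma bool_lt_inf (K : Type) : infinite_card K -> card_lt bool K.
Proof.
move=> infK; split; first exact: bool_le_inf.
move=> KB; have [g gi] := cle_trans infK KB.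
have : g 0%N = g 1%N \/ g 0%N = g 2%N \/ g 1%N = g 2%N.
  by case: (g 0%N); case: (g 1%N); case: (g 2%N); auto.
by case=> [/gi|[/gi|/gi]].
Qed.

Section CardL.
Variables (K L : Type).
Hypothesis infK : infinite_card K.
Hypothesis infL : infinite_card L.
Hypothesis powLK : pow_lt_eq L K.

Lemma prod_le : card_le (L * L) L.
Proof.
apply: cle_trans (powLK (bool_lt_inf infK)).
exists (fun p (t : bool) => if t then p.1 else p.2).
move=> [a b] [a' b'] E.
by have := congr1 (fun h => h true) E; have := congr1 (fun h => h false) E => /= -> ->.
Qed.

Lemma option_le : card_le (option L) L.
Proof.
apply: cle_trans prod_le.
have [e ei] := infL.
exists (fun o => match o with Some l => (l, e 0%N) | None => (e 0%N, e 1%N) end).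
move=> [x|] [y|] //=.
- by case=> ->.
- by case=> _ /ei.
- by case=> _ /esym /ei.
Qed.

Lemma sigma_le (I : Type) (F : I -> Type) :
  card_le I L -> (forall i, card_le (F i) L) -> card_le {i : I & F i} L.
Proof.
move=> [h hi] HF; apply: cle_trans prod_le.
pose g i := proj1_sig (cid (HF i)).
have gi i : injective (g i) by rewrite /g; case: (cid _).
exists (fun p => (h (projT1 p), g (projT1 p) (projT2 p))).
move=> [i x] [i' x'] /= [] /hi E; subst i' => /gi -> //.
Qed.

Lemma union_le (I T : Type) (Q : I -> T -> Prop) :
  card_le I L -> (forall i, card_le {b | Q i b} L) -> card_le {b | exists i, Q i b} L.
Proof.
move=> IL QL; apply: cle_trans (sigma_le (F := fun i => {b | Q i b}) IL QL).
apply: (cle_cover (R := fun w b => proj1_sig (projT2 w) = b)).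
  by move=> w b b' <- <-.
by move=> b [i Qib]; exists (existT _ i (exist _ b Qib)).
Qed.

Lemma K_le_L : card_le K L.
Proof.
case: (pselect (card_le K L)) => // nKL; exfalso.
have LK : card_lt L K by split => //; case: (cle_total L K) => // /nKL.
have := powLK LK => LLL.
apply: (@cantor L); apply: cle_trans LLL; apply: cle_fun; exact: bool_le_inf.
Qed.

End CardL.

Lemma seq_start (K : Type) (k0 : K) : infinite_card K ->
  exists e : nat -> K, injective e /\ e 0%N = k0.
Proof.
move=> [e ei].
case: (pselect (exists m, k0 = e m)) => [[m Em]|N].
  pose sw n := if n == 0%N then m else if n == m then 0%N else n.
  have swK : cancel sw sw.
    move=> n; rewrite /sw.
    case: (n =P 0%N) => [->|n0]; case: (m =P 0%N) => [m0|m0]; rewrite ?eqxx /=; try lia.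
    all: try (case: (n =P m) => [nm|nm]); rewrite ?eqxx /=; try lia.
    all: repeat (case: eqP => ?); try lia.
  exists (fun n => e (sw n)); split; last by rewrite /sw eqxx.
  by move=> a b /ei /(can_inj swK).
exists (fun n => match n with 0%N => k0 | n'.+1 => e n' end); split => //.
move=> [|a] [|b] //.
- by move=> E; case: N; exists b.
- by move=> E; case: N; exists a.
- by move/ei => ->.
Qed.

Lemma avoid_point (K : Type) (k0 : K) : infinite_card K ->
  exists psi : K -> K, injective psi /\ forall k, psi k <> k0.
Proof.
move=> /(seq_start k0) [e [ei e0]].
pose psi k := match pselect (exists n, k = e n) with
  | left H => e (proj1_sig (cid H)).+1 | right _ => k end.
exists psi; split.
  move=> a b; rewrite /psi.
  case: (pselect _) => [Ha|Na]; case: (pselect _) => [Hb|Nb].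
  - case: (cid Ha) => n En; case: (cid Hb) => n' En' /= /ei [E].
    by subst.
  - case: (cid Ha) => n En /= E; case: Nb; by exists n.+1.
  - case: (cid Hb) => n En /= E; case: Na; by exists n.+1.
  - done.
move=> k; rewrite /psi; case: (pselect _) => [H|N].
  by case: (cid H) => n En /=; rewrite -e0 => /ei.
by move=> E; apply: N; exists 0%N; rewrite E e0.
Qed.

Definition unsome (S : Type) (o : option S) : o <> None -> S :=
  match o as o' return o' <> None -> S with
  | Some s => fun _ => s
  | None => fun H => False_rect _ (H erefl)
  end.

Lemma unsomeE (S : Type) (o : option S) (H : o <> None) : Some (unsome H) = o.
Proof. by move: H; case: o. Qed.

Lemma option_lt (K S : Type) : infinite_card K -> card_lt S K -> card_lt (option S) K.
Proof.
move=> infK [[g gi] nKS]; split.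
  have [k0 Hk0] : exists k0, forall s, g s <> k0.
    apply: NNPP => N; apply: nKS.
    have Hs : forall k, True -> exists s, g s = k.
      move=> k _; apply: NNPP => N2; apply: N; exists k => s E; apply: N2; by exists s.
    have := cle_cover (P := fun _ : K => True) (R := fun s k => g s = k)
      (fun s k k' E E' => etrans (esym E) E') Hs.
    apply: cle_trans.
    by exists (fun k => exist (fun _ : K => True) k I) => x y [].
  exists (fun o => match o with Some s => g s | None => k0 end).
  move=> [x|] [y|] //=.
  - by move/gi => ->.
  - by move=> E; case: (Hk0 x).
  - by move=> E; case: (Hk0 y); rewrite E.
move=> [h hi]; apply: nKS.
have [ks Hks] : exists ks, forall k, k <> ks -> h k <> None.
  case: (pselect (exists k, h k = None)) => [[ks Eks]|N].
    by exists ks => k nk Ek; apply: nk; apply: hi; rewrite Ek Eks.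
  have [e _] := infK.
  by exists (e 0%N) => k _ Ek; apply: N; exists k.
have [psi [psii psiks]] := avoid_point ks infK.
have Hne : forall k, h (psi k) <> None by move=> k; apply: Hks; apply: psiks.
exists (fun k => unsome (Hne k)) => a b E.
apply: psii; apply: hi.
by rewrite -(unsomeE (Hne a)) -(unsomeE (Hne b)) E.
Qed.
Definition wo (K : Type) : rel K := proj1_sig (well_ordering_principle {classic K}).

Lemma wo_wo (K : Type) : well_order (@wo K).
Proof. exact: (proj2_sig (well_ordering_principle {classic K})). Qed.

Lemma wo_min (K : Type) (P : K -> Prop) : (exists x, P x) ->
  exists z, P z /\ forall x, P x -> wo z x.
Proof.
move=> [x Px].
have [|z [[Az lbz] _]] := @wo_wo K (fun x => `[< P x >]).
  by exists x; rewrite inE.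
exists z; split; first by move: Az; rewrite inE.
by move=> y Py; apply: lbz; rewrite inE.
Qed.

Lemma wo_min_uniq (K : Type) (P : K -> Prop) (z z' : K) :
  P z -> (forall x, P x -> wo z x) -> P z' -> (forall x, P x -> wo z' x) -> z = z'.
Proof.
move=> Pz lz Pz' lz'.
have [|w [_ Uw]] := @wo_wo K (fun x => `[< P x >]).
  by exists z; rewrite inE.
have m1 : minimum_of (@wo K) (fun x => `[< P x >]) z.
  split; first by rewrite inE.
  by move=> y; rewrite inE; apply: lz.
have m2 : minimum_of (@wo K) (fun x => `[< P x >]) z'.
  split; first by rewrite inE.
  by move=> y; rewrite inE; apply: lz'.
by rewrite -(Uw _ m1) (Uw _ m2).
Qed.

Lemma wo_refl (K : Type) (a : K) : wo a a.
Proof. by have [z [-> H]] := @wo_min K (fun x => x = a) (ex_intro _ a erefl); apply: H. Qed.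

Lemma wo_total (K : Type) (a b : K) : wo a b \/ wo b a.
Proof.
have [z [[->|->] H]] := @wo_min K (fun x => x = a \/ x = b) (ex_intro _ a (or_introl erefl)).
  by left; apply: H; right.
by right; apply: H; left.
Qed.

Lemma wo_anti (K : Type) (a b : K) : wo a b -> wo b a -> a = b.
Proof.
move=> ab ba.
apply: (@wo_min_uniq K (fun x => x = a \/ x = b)).
- by left.
- by move=> x [->|->] //; apply: wo_refl.
- by right.
- by move=> x [->|->] //; apply: wo_refl.
Qed.

Lemma wo_trans (K : Type) (a b c : K) : wo a b -> wo b c -> wo a c.
Proof.
move=> ab bc.
have [z [Pz H]] := @wo_min K (fun x => x = a \/ x = b \/ x = c) (ex_intro _ a (or_introl erefl)).
case: Pz => [E|[E|E]]; subst z.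
- by apply: H; right; right.
- by move: (wo_anti ab (H a (or_introl erefl))) => E; subst.
- by move: (wo_anti bc (H b (or_intror (or_introl erefl)))) => E; subst.
Qed.

Definition wlt (K : Type) (a b : K) := wo a b /\ a <> b.

Lemma wlt_irr (K : Type) (a : K) : ~ wlt a a.
Proof. by case. Qed.

Lemma wlt_wo_trans (K : Type) (a b c : K) : wlt a b -> wo b c -> wlt a c.
Proof.
move=> [ab nab] bc; split; first exact: wo_trans bc.
move=> E; subst c; apply: nab; exact: wo_anti.
Qed.

Lemma wlt_trans (K : Type) (a b c : K) : wlt a b -> wlt b c -> wlt a c.
Proof. by move=> ab [bc _]; apply: wlt_wo_trans bc. Qed.

Lemma not_wlt (K : Type) (a b : K) : ~ wlt a b -> wo b a.
Proof.
move=> N; case: (wo_total a b) => // ab.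
case: (pselect (a = b)) => [->|nab]; first exact: wo_refl.
by case: N.
Qed.

Section WellOrderK.
Variable K : Type.
Hypothesis regK : regular_card K.

Definition Ugood (k : K) := forall k1 : K, card_le K {j : K | wlt j k1} -> wlt k k1.

Lemma seg_small (k : K) : Ugood k -> card_lt {j | wlt j k} K.
Proof.
move=> Uk; split; first by exists (@proj1_sig _ _) => x y /sig_eqP.
by move=> H; apply: (@wlt_irr _ k); apply: Uk.
Qed.

Lemma K_le_U : card_le K {k | Ugood k}.
Proof.
case: (pselect (exists k1 : K, card_le K {j : K | wlt j k1})) => [Ex|N].
  have [k0 [Hk0 Hmin]] := wo_min Ex.
  apply: (cle_trans Hk0).
  apply: (@cle_sub K (fun j => wlt j k0) Ugood) => j jk0 k1 Hk1.
  exact: wlt_wo_trans jk0 (Hmin _ Hk1).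
exists (fun k => exist Ugood k (fun k1 Hk1 => False_ind _ (N (ex_intro _ k1 Hk1)))).
by move=> x y E; have := congr1 (@proj1_sig _ _) E.
Qed.

Lemma bound_small (T : Type) (g : T -> K) : card_lt T K -> (forall t, Ugood (g t)) ->
  exists m, Ugood m /\ forall t, wlt (g t) m.
Proof.
move=> TK Ug; apply: NNPP => N.
have [h hi] := K_le_U.
have Asmall : forall t, card_lt {k : K | wo (proj1_sig (h k)) (g t)} K.
  move=> t; apply: (clt_le (option_lt regK.1 (seg_small (Ug t)))).
  apply: (cle_cover (R := fun (o : option {j | wlt j (g t)}) k =>
    match o with None => proj1_sig (h k) = g t
    | Some s => proj1_sig s = proj1_sig (h k) end)).
    move=> [s|] b b' /=.
      by move=> E1 E2; apply: hi; apply: sig_eqP; rewrite -E1 -E2.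
    by move=> E1 E2; apply: hi; apply: sig_eqP; rewrite E1 E2.
  move=> k1 Hk1.
  case: (pselect (proj1_sig (h k1) = g t)) => [E|nE]; first by exists None.
  by exists (Some (exist _ (proj1_sig (h k1)) (conj Hk1 nE))).
have [k Hk] := regK.2 T (fun t k => wo (proj1_sig (h k)) (g t)) TK Asmall.
have [t Ht] : exists t, ~ wlt (g t) (proj1_sig (h k)).
  apply: NNPP => N2; apply: N; exists (proj1_sig (h k)); split; first exact: proj2_sig (h k).
  by move=> t; apply: NNPP => N3; apply: N2; exists t.
by apply: (Hk t); apply: not_wlt.
Qed.

End WellOrderK.
Section BA.
Variables (d : Order.disp_t) (B : ctbDistrLatticeType d).
Implicit Types (a b x y J : B).

Definition lit (p : B * bool) : B := if p.2 then p.1 else ~` p.1.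
Definition prodl (s : seq (B * bool)) : B := \meet_(p <- s) lit p.
Definition joinl (s : seq B) : B := \join_(c <- s) c.

Definition Phi (C D Z : B -> Prop) : Prop :=
  forall (s : seq (B * bool)) (cs es : seq B),
  uniq (map fst s) -> (forall p, p \in s -> Z p.1) ->
  (forall c, c \in cs -> C c) -> (forall e, e \in es -> D e) ->
  ~ (prodl s <= joinl cs `|` joinl es).

Lemma disj_leC a b : a `&` b = \bot -> a <= ~` b.
Proof. by move=> H; rewrite -[a]meetx1 -(joinxC b) meetUr H join0x leIr. Qed.

Lemma BF1 a b J : a `&` b <= J -> a `&` ~` J <= ~` b.
Proof.
move=> H; apply: disj_leC; apply/eqP; rewrite -lex0 -(meetxC J).
by rewrite -meetA [~` J `&` b]meetC meetA leI2.
Qed.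

Lemma BF2 a J e : a `&` ~` J <= e -> a <= J `|` e.
Proof.
by move=> H; rewrite -[a]meetx1 -(joinxC J) meetUr leU2 // leIr.
Qed.

Lemma Phi_indep C D Z : Phi C D Z -> independent Z.
Proof.
move=> HP n y eps yi Zy.
pose s := [seq (y i, eps i) | i <- enum 'I_n].
have Hs : prodl s = \meet_(i < n) (if eps i then y i else ~` y i).
  by rewrite /prodl big_map big_enum.
rewrite -Hs; apply/negP => /eqP E.
apply: (HP s [::] [::]) => //.
- rewrite /s -map_comp; rewrite (map_inj_uniq (f := fun i => y i)) ?enum_uniq //.
- by move=> p /mapP [i _ ->] /=.
- by rewrite E le0x.
Qed.

Lemma Q_joinl (Q : B -> Prop) (cs : seq B) : Q \bot ->
  (forall a b, Q a -> Q b -> Q (a `|` b)) -> (forall c, c \in cs -> Q c) -> Q (joinl cs).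
Proof.
move=> Q0 QU; elim: cs => [|c cs IH] Hcs; rewrite /joinl ?big_nil ?big_cons //.
apply: (QU); first by apply: (Hcs); rewrite mem_head.
by apply: IH => e He; apply: (Hcs); rewrite inE He orbT.
Qed.

Lemma Q_prodl (Q : B -> Prop) (s : seq (B * bool)) : Q \top ->
  (forall a b, Q a -> Q b -> Q (a `&` b)) -> (forall a, Q a -> Q (~` a)) ->
  (forall p, p \in s -> Q p.1) -> Q (prodl s).
Proof.
move=> Q1 QI QC; elim: s => [|p s IH] Hs; rewrite /prodl ?big_nil ?big_cons //.
apply: (QI).
  rewrite /lit; case: p.2; [apply: (Hs)|apply: (QC); apply: (Hs)]; by rewrite mem_head.
by apply: IH => q Hq; apply: (Hs); rewrite inE Hq orbT.
Qed.

Lemma joinl_le (cs : seq B) x : (forall c, c \in cs -> c <= x) -> joinl cs <= x.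
Proof.
elim: cs => [|c cs IH] H; rewrite /joinl ?big_nil ?big_cons ?le0x //.
rewrite leUx H ?mem_head //=; apply: IH => e He; apply: (H); by rewrite inE He orbT.
Qed.

Lemma extend_Phi (C D Z Q : B -> Prop) x :
  Q \bot -> Q \top ->
  (forall a b, Q a -> Q b -> Q (a `&` b)) ->
  (forall a b, Q a -> Q b -> Q (a `|` b)) ->
  (forall a, Q a -> Q (~` a)) ->
  (forall z, Z z -> Q z) -> (forall c, C c -> Q c) -> (forall e, D e -> Q e) ->
  (forall q, Q q -> q <= x -> exists c, C c /\ q <= c) ->
  (forall q, Q q -> q <= ~` x -> exists e, D e /\ q <= e) ->
  Phi C D Z -> Phi C D (fun z => Z z \/ z = x).
Proof.
move=> Q0 Q1 QI QU QC QZ QCC QDD fC fD HP s cs es us Hs Hcs Hes Hle.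
case: (boolP (x \in map fst s)) => [xin|xnin]; last first.
  apply: (HP s cs es us) => // p ps; case: (Hs p ps) => // E.
  by move: xnin; rewrite -E (map_f fst ps).
have [p ps Ep] := mapP xin.
have Hperm := perm_to_rem ps.
set s' := rem p s in Hperm.
have Hprod : prodl s = lit p `&` prodl s'.
  by rewrite /prodl (perm_big _ Hperm) big_cons.
have us2 : uniq (map fst (p :: s')) by rewrite -(perm_uniq (perm_map fst Hperm)).
move: us2; rewrite /= => /andP [pnin us'].
have Hs' : forall q, q \in s' -> Z q.1.
  move=> q qs'; have qs : q \in s by rewrite (perm_mem Hperm) inE qs' orbT.
  case: (Hs q qs) => // E; move: pnin; by rewrite -Ep -E (map_f fst qs').
have Qs' : Q (prodl s').
  by apply: Q_prodl => // q /Hs'; apply: (QZ).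
have QJ : Q (joinl cs `|` joinl es).
  apply: (QU); apply: Q_joinl => //.
    by move=> c Hc; apply: (QCC); exact: Hcs.
  by move=> c Hc; apply: (QDD); exact: Hes.
move: Hle; rewrite Hprod /lit -Ep; case: p.2 => Hle.
- have H1 : prodl s' `&` ~` (joinl cs `|` joinl es) <= ~` x.
    by apply: BF1; rewrite meetC.
  have [e [De He]] := fD _ (QI _ _ Qs' (QC _ QJ)) H1.
  apply: (HP s' cs (e :: es) us' Hs' Hcs).
    by move=> e'; rewrite inE => /orP [/eqP ->|]; [|apply: (Hes)].
  have E1 : joinl cs `|` joinl (e :: es) = (joinl cs `|` joinl es) `|` e.
    by rewrite /joinl big_cons -joinA [e `|` _]joinC.
  by rewrite E1; apply: BF2 He.
- have H1 : prodl s' `&` ~` (joinl cs `|` joinl es) <= x.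
    by rewrite -[x]complK; apply: BF1; rewrite meetC.
  have [c [Cc Hc]] := fC _ (QI _ _ Qs' (QC _ QJ)) H1.
  apply: (HP s' (c :: cs) es us' Hs').
    by move=> c'; rewrite inE => /orP [/eqP ->|]; [|apply: (Hcs)].
    done.
  have E1 : joinl (c :: cs) `|` joinl es = (joinl cs `|` joinl es) `|` c.
    by rewrite /joinl big_cons -joinA joinC.
  by rewrite E1; apply: BF2 Hc.
Qed.

Lemma Phi0_holds (C D Q : B -> Prop) x :
  Q \bot -> (forall a b, Q a -> Q b -> Q (a `|` b)) ->
  (forall c, C c -> c <= x /\ Q c) -> (forall e, D e -> e <= ~` x) -> ~ Q x ->
  Phi C D (fun _ => False).
Proof.
move=> Q0 QU HC HD nQx s cs es _ Hs Hcs Hes.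
case: s Hs => [|p s] Hs; last by case: (Hs p (mem_head _ _)).
rewrite /prodl big_nil => Hle.
have jc : joinl cs <= x by apply: joinl_le => c /Hcs /HC [].
have je : joinl es <= ~` x by apply: joinl_le => e /Hes /HD.
have xje : x `&` joinl es = \bot.
  apply/eqP; rewrite -lex0 -(meetxC x); exact: leI2.
have : x <= joinl cs.
  by rewrite -(disjoint_lexUl _ xje); apply: le_trans Hle; apply: lex1.
move=> xjc; have Ex : x = joinl cs by apply/eqP; rewrite eq_le xjc jc.
apply: nQx; rewrite Ex; apply: Q_joinl => //.
by move=> c /Hcs /HC [].
Qed.

End BA.
Lemma cle_option (A B : Type) : card_le A B -> card_le (option A) (option B).
Proof.
move=> [g gi]; exists (fun o => match o with Some a => Some (g a) | None => None end).
by move=> [x|] [y|] //= [] /gi ->.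
Qed.

Lemma cle_prod (A A' B B' : Type) : card_le A A' -> card_le B B' -> card_le (A * B) (A' * B').
Proof.
move=> [g gi] [h hi]; exists (fun p => (g p.1, h p.2)).
by move=> [x y] [x' y'] /= [] /gi -> /hi ->.
Qed.

Lemma empty_le (T U : Type) (P : T -> Prop) : (forall x, ~ P x) -> card_le {x | P x} U.
Proof.
move=> N; exists (fun x => False_rect U (N _ (proj2_sig x))).
by move=> x; case: (N _ (proj2_sig x)).
Qed.

Lemma image_le (W T L : Type) (g : W -> T) (P : T -> Prop) :
  card_le W L -> (forall b, P b -> exists w, g w = b) -> card_le {b | P b} L.
Proof.
move=> WL H; apply: cle_trans WL.
by apply: (cle_cover (R := fun w b => g w = b)) => // w b b' <- <-.
Qed.

Lemma or_le (L T : Type) (P Q : T -> Prop) : card_le bool L ->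
  (forall I (F : I -> Type), card_le I L -> (forall i, card_le (F i) L) -> card_le {i : I & F i} L) ->
  card_le {b | P b} L -> card_le {b | Q b} L -> card_le {b | P b \/ Q b} L.
Proof.
move=> boolL sigL PL QL.
have := sigL bool (fun i => {b | if i then P b else Q b}) boolL.
have : (forall i : bool, card_le {b | if i then P b else Q b} L) by case.
move=> H /(_ H) SL; apply: cle_trans SL.
apply: (cle_cover (R := fun w b => proj1_sig (projT2 w) = b)).
  by move=> w b b' <- <-.
move=> b [Pb|Qb].
  by exists (existT (fun i : bool => {b | if i then P b else Q b}) true (exist _ b Pb)).
by exists (existT (fun i : bool => {b | if i then P b else Q b}) false (exist _ b Qb)).
Qed.

Lemma chain_fin (T : Type) (U : eqType) (F : set (set T)) (g : U -> T) (s : seq U) :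
  total_on F subset -> (forall p, p \in s -> exists2 Y, F Y & Y (g p)) -> s <> [::] ->
  exists2 Y, F Y & forall p, p \in s -> Y (g p).
Proof.
move=> Ftot; elim: s => [|p s IH] H _ //.
have [Y1 FY1 Y1p] := H p (mem_head _ _).
case: s IH H => [|p' s] IH H.
  by exists Y1 => // q; rewrite inE => /eqP ->.
have ne : p' :: s <> [::] by [].
have [|Y2 FY2 Y2s] := IH _ ne.
- by move=> q qs; apply: H; rewrite inE qs orbT.
- case: (Ftot Y1 Y2 FY1 FY2) => [Y12|Y21].
    exists Y2 => // q; rewrite inE => /orP [/eqP ->|qs]; [exact: Y12|exact: Y2s].
  exists Y1 => // q; rewrite inE => /orP [/eqP ->|qs]; [done|exact: Y21 _ (Y2s _ qs)].
Qed.
Lemma exZ (d : Order.disp_t) (B : ctbDistrLatticeType d) (C D X : B -> Prop) :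
  exists Z : B -> Prop, (forall z, Z z -> X z) /\
   (Phi C D (fun _ => False) -> Phi C D Z /\
       forall x, X x -> ~ Z x -> ~ Phi C D (fun z => Z z \/ z = x)) /\
   (~ Phi C D (fun _ => False) -> forall z, ~ Z z).
Proof.
case: (pselect (Phi C D (fun _ => False))) => [H0|N0]; last first.
  exists (fun _ => False); split; first done.
  by split; [move=> H; case: (N0 H)|move=> _ z].
pose P (Z : set B) := (forall z, Z z -> X z) /\ Phi C D Z.
have chainP : forall F : set (set B), (F `<=` P)%classic ->
    total_on F subset -> P (\bigcup_(Y in F) Y)%classic.
  move=> F FP Ftot; split.
    by move=> z [Y FY Yz]; exact: (FP Y FY).1 z Yz.
  move=> s cs es us Hs Hcs Hes.
  case: (pselect (s = [::])) => [E|nE].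
    by subst s; apply: H0 => // p; rewrite in_nil.
  have [Y FY Ys] := chain_fin (g := fst) Ftot Hs nE.
  exact: (FP Y FY).2 s cs es us Ys Hcs Hes.
have [Z [[ZX PZ] Zmax]] := Zorn_bigcup chainP.
exists Z; split; first exact: ZX.
split; last by move=> /(_ H0).
move=> _; split; first exact: PZ.
move=> x Xx nZx PZx.
have Hpr : (Z `<` (fun z => Z z \/ z = x))%classic.
  split; first by move=> z Zz; left.
  by move=> Hs; apply: nZx; apply: Hs; right.
apply: (Zmax _ Hpr).
split => //; by move=> z [/ZX|->].
Qed.
Section Main.
Variables (K : Type) (d : Order.disp_t) (B : ctbDistrLatticeType d) (L : Type).
Hypothesis regK : regular_card K.
Hypothesis infL : infinite_card L.
Hypothesis powLK : pow_lt_eq L K.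
Variable f : B -> B -> Prop.
Hypothesis fsmall : forall a, card_lt {x | f a x} K.
Variable Zf : (B -> Prop) -> (B -> Prop) -> B -> Prop.
Hypothesis Zsize : forall C D, card_le {z | Zf C D z} L.

Lemma KL : card_le K L.
Proof. exact: K_le_L infL powLK. Qed.

Lemma boolL : card_le bool L.
Proof. exact: bool_le_inf infL. Qed.

Lemma sigL (I : Type) (F : I -> Type) :
  card_le I L -> (forall i, card_le (F i) L) -> card_le {i : I & F i} L.
Proof. move=> IL FL; exact: (@sigma_le K L regK.1 powLK I F IL FL). Qed.

Lemma prodL (A A' : Type) : card_le A L -> card_le A' L -> card_le (A * A') L.
Proof. by move=> AL A'L; apply: cle_trans (prod_le regK.1 powLK); apply: cle_prod. Qed.

Inductive stage : K -> B -> Prop :=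
| st_bot k : stage k \bot
| st_top k : stage k \top
| st_prev k j b : wlt j k -> stage j b -> stage k b
| st_meet k j a b : wlt j k -> stage j a -> stage j b -> stage k (a `&` b)
| st_join k j a b : wlt j k -> stage j a -> stage j b -> stage k (a `|` b)
| st_compl k j a : wlt j k -> stage j a -> stage k (~` a)
| st_f k j a b : wlt j k -> stage j a -> f a b -> stage k b
| st_Z k j (C D : B -> Prop) b : wlt j k -> card_lt {c | C c} K -> card_lt {c | D c} K ->
    (forall c, C c -> stage j c) -> (forall c, D c -> stage j c) -> Zf C D b -> stage k b.

Definition Vt (k : K) := {j : {j : K | wlt j k} & {b : B | stage (proj1_sig j) b}}.
Definition bV k (v : Vt k) : B := proj1_sig (projT2 v).

Definition CodeJ (j : K) :=
  {m : {m : K | Ugood m} & ({i : K | wlt i (proj1_sig m)} -> option {b : B | stage j b})}.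
Definition decode j (c : CodeJ j) : B -> Prop :=
  fun b => exists i, option_map (@proj1_sig _ _) (projT2 c i) = Some b.

Definition CodeIdx k := {j : {j : K | wlt j k} & (CodeJ (proj1_sig j) * CodeJ (proj1_sig j))%type}.
Definition WZ k := {w : CodeIdx k &
  {z | Zf (decode (projT2 w).1) (decode (projT2 w).2) z}}.

Lemma segL k : card_le {j : K | wlt j k} L.
Proof. by apply: cle_trans KL; exists (@proj1_sig _ _) => x y /sig_eqP. Qed.

Lemma CodeJ_le j : card_le {b | stage j b} L -> card_le (CodeJ j) L.
Proof.
move=> SL; apply: sigL.
  by apply: cle_trans KL; exists (@proj1_sig _ _) => x y /sig_eqP.
move=> [m Um] /=; apply: cle_trans (powLK (seg_small Um)).
apply: cle_fun; apply: cle_trans (option_le regK.1 infL powLK).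
exact: cle_option.
Qed.

Lemma code_ex j (C : B -> Prop) : card_lt {c | C c} K -> (forall c, C c -> stage j c) ->
  exists c : CodeJ j, decode c = C.
Proof.
move=> Csmall Cj.
have [g gi] := Csmall.1.
have [h hi] := K_le_U K.
pose g' (t : {c | C c}) := proj1_sig (h (g t)).
have g'i : injective g'.
  by move=> t t' /sig_eqP /hi /gi.
have [m [Um Hm]] := bound_small regK (g := g') Csmall (fun t => proj2_sig (h (g t))).
pose phi (i : {i | wlt i m}) : option {b | stage j b} :=
  match pselect (exists t, g' t = proj1_sig i) with
  | left H => Some (exist _ (proj1_sig (proj1_sig (cid H))) (Cj _ (proj2_sig (proj1_sig (cid H)))))
  | right _ => None end.
exists (existT _ (exist _ m Um) phi).
apply: funext => b; apply: propext; split.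
  move=> [i]; rewrite /= /phi; case: pselect => [H|//] /=.
  by case: (cid H) => t Ht /= [<-]; exact: proj2_sig t.
move=> Cb; pose t := exist C b Cb.
exists (exist _ (g' t) (Hm t)); rewrite /= /phi.
case: pselect => [H|N]; last by case: N; exists t.
case: (cid H) => t' Ht' /=.
by have -> : t' = t by apply: g'i.
Qed.

Definition P_all k b :=
  (b = \bot \/ b = \top) \/
  (exists v : Vt k, bV v = b) \/
  (exists v : Vt k * Vt k, bV v.1 `&` bV v.2 = b) \/
  (exists v : Vt k * Vt k, bV v.1 `|` bV v.2 = b) \/
  (exists v : Vt k, ~` bV v = b) \/
  (exists w : {v : Vt k & {c | f (bV v) c}}, proj1_sig (projT2 w) = b) \/
  (exists w : WZ k, proj1_sig (projT2 w) = b).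

Lemma stage_P k b : stage k b -> P_all k b.
Proof.
case=> {k b}.
- by move=> k; left; left.
- by move=> k; left; right.
- move=> k j b hj sj; right; left.
  by exists (existT _ (exist _ j hj) (exist _ b sj)).
- move=> k j a b hj sa sb; right; right; left.
  by exists (existT _ (exist _ j hj) (exist _ a sa), existT _ (exist _ j hj) (exist _ b sb)).
- move=> k j a b hj sa sb; right; right; right; left.
  by exists (existT _ (exist _ j hj) (exist _ a sa), existT _ (exist _ j hj) (exist _ b sb)).
- move=> k j a hj sa; right; right; right; right; left.
  by exists (existT _ (exist _ j hj) (exist _ a sa)).
- move=> k j a b hj sa fab; right; right; right; right; right; left.
  by exists (existT (fun v : Vt k => {c | f (bV v) c})
               (existT _ (exist _ j hj) (exist _ a sa)) (exist _ b fab)).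
- move=> k j C D b hj Cs Ds Cj Dj Zb; right; right; right; right; right; right.
  have [cC EC] := code_ex Cs Cj.
  have [cD ED] := code_ex Ds Dj.
  have Zb' : Zf (decode cC) (decode cD) b by rewrite EC ED.
  by exists (existT (fun w : CodeIdx k => {z | Zf (decode (projT2 w).1) (decode (projT2 w).2) z})
               (existT _ (exist _ j hj) (cC, cD)) (exist _ b Zb')).
Qed.

Lemma ugood_seg (k j : K) : Ugood k -> wlt j k -> Ugood j.
Proof. by move=> Uk jk k1 H; apply: wlt_trans jk (Uk _ H). Qed.

Lemma stage_le k : Ugood k -> card_le {b | stage k b} L.
Proof.
move=> Uk; apply: NNPP => N.
have [k0 [[Uk0 Nk0] Hmin]] := wo_min (ex_intro (fun k : K => Ugood k /\ ~ card_le {b | stage k b} L) k (conj Uk N)).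
apply: Nk0.
have IH : forall j, wlt j k0 -> card_le {b | stage j b} L.
  move=> j jk0; apply: NNPP => Nj.
  have := Hmin j (conj (ugood_seg Uk0 jk0) Nj) => k0j.
  by case: jk0 => jk0 njk0; apply: njk0; apply: wo_anti.
have VL : card_le (Vt k0) L.
  by apply: sigL; [apply: segL|move=> [j hj]; apply: IH].
have ffL : forall a, card_le {c | f a c} L.
  by move=> a; apply: cle_trans (fsmall a).1 KL.
have VVL : card_le (Vt k0 * Vt k0) L by apply: prodL.
have CIL : card_le (CodeIdx k0) L.
  apply: sigL; first exact: segL.
  by move=> [j hj]; apply: prodL; apply: CodeJ_le; apply: IH.
have WZL : card_le (WZ k0) L by apply: sigL.
have VfL : card_le {v : Vt k0 & {c | f (bV v) c}} L by apply: sigL.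
apply: (cle_trans (cle_sub (@stage_P k0))).
have orL := fun P Q => @or_le L B P Q boolL sigL.
apply: (orL).
  apply: (image_le (g := fun t : bool => if t then \bot else \top)) => //; first exact: boolL.
  by move=> b [->|->]; [exists true|exists false].
apply: (orL); first by apply: (image_le (g := @bV k0)).
apply: (orL); first by apply: (image_le (g := fun v : Vt k0 * Vt k0 => bV v.1 `&` bV v.2)).
apply: (orL); first by apply: (image_le (g := fun v : Vt k0 * Vt k0 => bV v.1 `|` bV v.2)).
apply: (orL); first by apply: (image_le (g := fun v : Vt k0 => ~` bV v)).
apply: (orL).
  by apply: (image_le (g := fun w : {v : Vt k0 & {c | f (bV v) c}} => proj1_sig (projT2 w))).
by apply: (image_le (g := fun w : WZ k0 => proj1_sig (projT2 w))).
Qed.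

Definition Astar b := exists k, Ugood k /\ stage k b.

Lemma Astar_le : card_le {b | Astar b} L.
Proof.
have H : forall b, Astar b -> exists k : {k | Ugood k}, stage (proj1_sig k) b.
  by move=> b [k [Uk sk]]; exists (exist _ k Uk).
apply: (cle_trans (cle_sub H)).
apply: (@union_le K L regK.1 powLK {k | Ugood k} B (fun k b => stage (proj1_sig k) b)).
  by apply: cle_trans KL; exists (@proj1_sig _ _) => x y /sig_eqP.
by move=> [k Uk]; apply: stage_le.
Qed.

Lemma two_bound (j1 j2 : K) : Ugood j1 -> Ugood j2 ->
  exists m, Ugood m /\ wlt j1 m /\ wlt j2 m.
Proof.
move=> U1 U2.
have [m [Um Hm]] := bound_small regK (g := fun b : bool => if b then j1 else j2)
  (bool_lt_inf regK.1) (fun b => if b as b' return Ugood (if b' then j1 else j2) then U1 else U2).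
by exists m; split => //; split; [apply: (Hm true)|apply: (Hm false)].
Qed.

Lemma some_good : exists k : K, Ugood k.
Proof.
have [h _] := K_le_U K; have [e _] := regK.1.
by exists (proj1_sig (h (e 0%N))); exact: proj2_sig (h (e 0%N)).
Qed.

Lemma Astar_bot : Astar \bot.
Proof. by have [k Uk] := some_good; exists k; split => //; apply: st_bot. Qed.

Lemma Astar_top : Astar \top.
Proof. by have [k Uk] := some_good; exists k; split => //; apply: st_top. Qed.

Lemma Astar_meet a b : Astar a -> Astar b -> Astar (a `&` b).
Proof.
move=> [j1 [U1 s1]] [j2 [U2 s2]].
have [m [Um [h1 h2]]] := two_bound U1 U2.
have [m' [Um' [h _]]] := two_bound Um Um.
exists m'; split; first done.
by apply: (st_meet h); [exact: st_prev h1 s1|exact: st_prev h2 s2].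
Qed.

Lemma Astar_join a b : Astar a -> Astar b -> Astar (a `|` b).
Proof.
move=> [j1 [U1 s1]] [j2 [U2 s2]].
have [m [Um [h1 h2]]] := two_bound U1 U2.
have [m' [Um' [h _]]] := two_bound Um Um.
exists m'; split; first done.
by apply: (st_join h); [exact: st_prev h1 s1|exact: st_prev h2 s2].
Qed.

Lemma Astar_compl a : Astar a -> Astar (~` a).
Proof.
move=> [j1 [U1 s1]].
have [m [Um [h1 _]]] := two_bound U1 U1.
by exists m; split => //; apply: (st_compl h1).
Qed.

Lemma Astar_f a b : Astar a -> f a b -> Astar b.
Proof.
move=> [j1 [U1 s1]] fab.
have [m [Um [h1 _]]] := two_bound U1 U1.
by exists m; split => //; apply: (st_f h1 s1).
Qed.

Lemma small_bound (C : B -> Prop) : card_lt {c | C c} K -> (forall c, C c -> Astar c) ->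
  exists m, Ugood m /\ forall c, C c -> stage m c.
Proof.
move=> Cs HC.
pose jc (t : {c | C c}) := proj1_sig (cid (HC _ (proj2_sig t))).
have Hjc : forall t, Ugood (jc t) /\ stage (jc t) (proj1_sig t).
  by move=> t; rewrite /jc; case: (cid _).
have [m [Um Hm]] := bound_small regK (g := jc) Cs (fun t => (Hjc t).1).
exists m; split => // c Cc.
pose t := exist C c Cc.
by apply: (st_prev (Hm t)); exact: (Hjc t).2.
Qed.

Lemma Astar_Z (C D : B -> Prop) b : card_lt {c | C c} K -> card_lt {c | D c} K ->
  (forall c, C c -> Astar c) -> (forall c, D c -> Astar c) -> Zf C D b -> Astar b.
Proof.
move=> Cs Ds HC HD Zb.
have [m1 [U1 H1]] := small_bound Cs HC.
have [m2 [U2 H2]] := small_bound Ds HD.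
have [m [Um [h1 h2]]] := two_bound U1 U2.
have [m' [Um' [h _]]] := two_bound Um Um.
exists m'; split => //.
apply: (st_Z h Cs Ds) => // c Hc; apply: st_prev; [exact: h1|exact: H1|exact: h2|exact: H2].
Qed.

Lemma main_contra (X : B -> Prop) : card_lt L {x | X x} ->
  (forall a b : B, a <= b -> exists c, f a c /\ f b c /\ a <= c /\ c <= b) ->
  (forall C D, (forall z, Zf C D z -> X z) /\
     (Phi C D (fun _ => False) -> Phi C D (Zf C D) /\
        forall x, X x -> ~ Zf C D x -> ~ Phi C D (fun z => Zf C D z \/ z = x))) -> False.
Proof.
move=> [_ nXL] fFN HZ.
have [x [Xx nAx]] : exists x, X x /\ ~ Astar x.
  apply: NNPP => N; apply: nXL; apply: cle_trans Astar_le.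
  apply: cle_sub => b Xb; apply: NNPP => nA; apply: N; by exists b.
pose C := fun c => f x c /\ Astar c /\ c <= x.
pose D := fun c => f (~` x) c /\ Astar c /\ c <= ~` x.
have Cs : card_lt {c | C c} K.
  by apply: (clt_le (fsmall x)); apply: cle_sub => c [].
have Ds : card_lt {c | D c} K.
  by apply: (clt_le (fsmall (~` x))); apply: cle_sub => c [].
have CA : forall c, C c -> Astar c by move=> c [_ []].
have DA : forall c, D c -> Astar c by move=> c [_ []].
have H0 : Phi C D (fun _ => False).
  apply: (@Phi0_holds d B C D Astar x Astar_bot Astar_join) => //.
    by move=> c [_ [Ac cx]].
  by move=> e [_ [_ ex]].
have [ZX HZ'] := HZ C D.
have [PZ Zmax] := HZ' H0.
have ZA : forall z, Zf C D z -> Astar z := fun z Hz => Astar_Z Cs Ds CA DA Hz.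
apply: (Zmax x Xx (fun Zx => nAx (ZA _ Zx))).
apply: (@extend_Phi d B C D (Zf C D) Astar x Astar_bot Astar_top Astar_meet Astar_join
   Astar_compl ZA CA DA) => //.
  move=> q Aq qx; have [c [fqc [fxc [qc cx]]]] := fFN q x qx.
  by exists c; split => //; split => //; split => //; apply: Astar_f fqc.
move=> q Aq qx; have [c [fqc [fxc [qc cx]]]] := fFN q (~` x) qx.
by exists c; split => //; split => //; split => //; apply: Astar_f fqc.
Qed.

End Main.

Theorem theorem4p2 (K : Type) (d : Order.disp_t) (B : ctbDistrLatticeType d)
  (L : Type) (X : B -> Prop) :
  regular_card K -> kappa_FN K B ->
  infinite_card L -> pow_lt_eq L K ->
  card_lt L {x : B | X x} ->
  exists Y : B -> Prop,
    (forall y, Y y -> X y) /\ independent Y /\ card_lt L {y : B | Y y}.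
Proof.
move=> regK [f [fsmall fFN]] infL powLK HX.
apply: NNPP => Hno.
have noInd : forall Y : B -> Prop, (forall y, Y y -> X y) -> independent Y ->
    card_le {y | Y y} L.
  move=> Y YX IY; apply: not_clt_le => Hlt; apply: Hno; exists Y; split => //.
pose Zf C D := proj1_sig (cid (exZ C D X)).
have HZ : forall C D, (forall z, Zf C D z -> X z) /\
   (Phi C D (fun _ => False) -> Phi C D (Zf C D) /\
       forall x, X x -> ~ Zf C D x -> ~ Phi C D (fun z => Zf C D z \/ z = x)) /\
   (~ Phi C D (fun _ => False) -> forall z, ~ Zf C D z).
  by move=> C D; rewrite /Zf; case: (cid _).
have Zsize : forall C D, card_le {z | Zf C D z} L.
  move=> C D; have [ZX [H1 H2]] := HZ C D.
  case: (pselect (Phi C D (fun _ => False))) => [H0|N0].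
    by apply: noInd => //; exact: Phi_indep (H1 H0).1.
  exact: empty_le (H2 N0).
apply: (main_contra regK infL powLK fsmall Zsize HX fFN).
by move=> C D; have [H1 [H2 _]] := HZ C D.
Qed.
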